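(* Let $T=(T_1,T_2)$ be a toral $2$-isometry on a complex Hilbert space $\mathcal H$. Then: (i) for all integers $k,l\ge0$, $$T_1^{*k}T_2^{*l}T_2^lT_1^k=T_1^{*k}T_1^k+T_2^{*l}T_2^l-I=kT_1^*T_1+lT_2^*T_2-(k+l-1)I;$$ (ii) if $f_0\in\ker T^*=\ker T_1^*\cap\ker T_2^*$ satisfies $\langle T_1^mf_0,T_1^pT_2^qf_0\rangle=0$ for all $q\ge1$, $m,p\ge0$, and $\langle T_2^nf_0,T_1^pT_2^qf_0\rangle=0$ for all $p\ge1$, $n,q\ge0$, then for all $m,n,p,q\ge0$, $$\langle T_1^mT_2^nf_0,T_1^pT_2^qf_0\rangle=\begin{cases}0 & m\ne p,\ n\ne q,\\ \langle T_2^nf_0,T_2^qf_0\rangle & m=p,\ n\ne q,\\ \langle T_1^mf_0,T_1^pf_0\rangle & m\ne p,\ n=q,\\ \|T_1^mf_0\|^2+\|T_2^nf_0\|^2-\|f_0\|^2 & m=p,\ n=q.\end{cases}$$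
   Context: A commuting pair $T=(T_1,T_2)$ of bounded operators on $\mathcal H$ is a toral $2$-isometry if $I-T_i^*T_i-T_j^*T_j+T_j^*T_i^*T_iT_j=0$ for all $i,j\in\{1,2\}$. *)

(* Defs.v *)
From mathcomp Require Export all_boot all_algebra complex.
From mathcomp Require Export reals.
Export GRing.Theory Num.Theory.
Set Implicit Arguments.
Unset Strict Implicit.
Unset Printing Implicit Defensive.
Local Open Scope ring_scope.
Local Open Scope complex_scope.

Definition is_inner_product (R : realType) (V : lmodType R[i])
  (ip : V -> V -> R[i]) : Prop :=
  [/\ (forall (a : R[i]) (x y z : V), ip (a *: x + y) z = a * ip x z + ip y z),
      (forall x y : V, ip y x = (ip x y)^*),
      (forall x : V, 0 <= ip x x) &
      (forall x : V, ip x x = 0 -> x = 0)].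

Definition ipnorm (R : realType) (V : lmodType R[i]) (ip : V -> V -> R[i])
  (x : V) : R := Num.sqrt (complex.Re (ip x x)).

Definition ip_complete (R : realType) (V : lmodType R[i])
  (ip : V -> V -> R[i]) : Prop :=
  forall u : nat -> V,
    (forall e : R, 0 < e -> exists N : nat, forall m n : nat,
        (N <= m)%N -> (N <= n)%N -> ipnorm ip (u m - u n) < e) ->
    exists l : V, forall e : R, 0 < e -> exists N : nat, forall n : nat,
        (N <= n)%N -> ipnorm ip (u n - l) < e.

Definition is_hilbert (R : realType) (V : lmodType R[i])
  (ip : V -> V -> R[i]) : Prop := is_inner_product ip /\ ip_complete ip.

Definition bounded_op (R : realType) (V : lmodType R[i])
  (ip : V -> V -> R[i]) (T : V -> V) : Prop :=
  (forall (a : R[i]) (x y : V), T (a *: x + y) = a *: T x + T y) /\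
  exists M : R, forall x : V, ipnorm ip (T x) <= M * ipnorm ip x.

Definition is_adjoint (R : realType) (V : lmodType R[i])
  (ip : V -> V -> R[i]) (T Ts : V -> V) : Prop :=
  forall x y : V, ip (T x) y = ip x (Ts y).

Definition toral_2isometry (R : realType) (V : lmodType R[i])
  (T Ts : 'I_2 -> V -> V) : Prop :=
  forall (i j : 'I_2) (x : V),
    x - Ts i (T i x) - Ts j (T j x) + Ts j (Ts i (T i (T j x))) = 0.

(* Main.v *)
Require Import Defs.
From mathcomp Require Import ring zify.
Local Open Scope ring_scope.
Local Open Scope complex_scope.

Section IP.
Variables (R : realType) (V : lmodType R[i]) (ip : V -> V -> R[i]).
Hypothesis Hip : is_inner_product ip.

Lemma ipDZl a x y z : ip (a *: x + y) z = a * ip x z + ip y z.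
Proof. by case: Hip. Qed.
Lemma ip_sym x y : ip y x = (ip x y)^*.
Proof. by case: Hip. Qed.
Lemma ip0l z : ip 0 z = 0.
Proof.
have := ipDZl 1 0 0 z; rewrite scale1r addr0 mul1r => H.
by apply/eqP; rewrite -(addrI _ (esym (etrans (addr0 _) H))).
Qed.
Lemma ipDl x y z : ip (x + y) z = ip x z + ip y z.
Proof. by have := ipDZl 1 x y z; rewrite scale1r mul1r. Qed.
Lemma ipZl a x z : ip (a *: x) z = a * ip x z.
Proof. by have := ipDZl a x 0 z; rewrite addr0 ip0l addr0. Qed.
Lemma ipNl x z : ip (- x) z = - ip x z.
Proof. by rewrite -scaleN1r ipZl mulN1r. Qed.
Lemma ipBl x y z : ip (x - y) z = ip x z - ip y z.
Proof. by rewrite ipDl ipNl. Qed.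
Lemma ip0r z : ip z 0 = 0.
Proof. by rewrite ip_sym ip0l conjc0. Qed.
Lemma ip_ext u v : (forall z, ip u z = ip v z) -> u = v.
Proof.
move=> H; apply/eqP; rewrite -subr_eq0; apply/eqP.
case: Hip => _ _ _; apply; by rewrite ipBl H subrr.
Qed.

Variables (T Ts : V -> V).
Hypothesis Hadj : forall x y, ip (T x) y = ip x (Ts y).
Lemma adjr x y : ip x (T y) = ip (Ts x) y.
Proof. by rewrite ip_sym Hadj -ip_sym. Qed.
Lemma adjl x y : ip (Ts x) y = ip x (T y).
Proof. by rewrite adjr. Qed.
Lemma iter_adjl k x y : ip (iter k Ts x) y = ip x (iter k T y).
Proof.
elim: k x y => [//|k IH] x y.
by rewrite iterS adjl IH iterSr.
Qed.
End IP.
Arguments ipDZl {R V ip}. Arguments ip_sym {R V ip}. Arguments ip0l {R V ip}.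
Arguments ipDl {R V ip}. Arguments ipZl {R V ip}. Arguments ipNl {R V ip}.
Arguments ipBl {R V ip}. Arguments ip0r {R V ip}. Arguments ip_ext {R V ip}.
Arguments adjr {R V ip} Hip {T Ts}. Arguments adjl {R V ip} Hip {T Ts}.
Arguments iter_adjl {R V ip} Hip {T Ts}.

Lemma ipsq (R : realType) (V : lmodType R[i]) (ip : V -> V -> R[i]) x :
  is_inner_product ip -> ((ipnorm ip x) ^+ 2)%:C = ip x x.
Proof.
case=> _ _ Hpos _; have := Hpos x; rewrite /ipnorm.
case: (ip x x) => a b; rewrite lecE /= => /andP[/eqP hb ha].
by rewrite sqr_sqrtr // hb.
Qed.

Theorem lemma6p1 (R : realType) (V : lmodType R[i]) (ip : V -> V -> R[i])
  (T Ts : 'I_2 -> V -> V) :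
  is_hilbert ip ->
  (forall k : 'I_2, bounded_op ip (T k)) ->
  (forall k : 'I_2, is_adjoint ip (T k) (Ts k)) ->
  (forall x : V, T ord0 (T ord_max x) = T ord_max (T ord0 x)) ->
  toral_2isometry T Ts ->
  let T1 := T ord0 in let T2 := T ord_max in
  let T1s := Ts ord0 in let T2s := Ts ord_max in
  (* (i) *)
  (forall (k l : nat) (x : V),
     iter k T1s (iter l T2s (iter l T2 (iter k T1 x)))
       = iter k T1s (iter k T1 x) + iter l T2s (iter l T2 x) - x /\
     iter k T1s (iter k T1 x) + iter l T2s (iter l T2 x) - x
       = k%:R *: T1s (T1 x) + l%:R *: T2s (T2 x)
         - (k%:R + l%:R - 1) *: x) /\
  (* (ii) *)
  (forall f0 : V,
     T1s f0 = 0 -> T2s f0 = 0 ->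
     (forall m p q : nat, (1 <= q)%N ->
        ip (iter m T1 f0) (iter p T1 (iter q T2 f0)) = 0) ->
     (forall n p q : nat, (1 <= p)%N ->
        ip (iter n T2 f0) (iter p T1 (iter q T2 f0)) = 0) ->
     forall m n p q : nat,
       let lhs := ip (iter m T1 (iter n T2 f0)) (iter p T1 (iter q T2 f0)) in
       (m <> p -> n <> q -> lhs = 0) /\
       (m = p -> n <> q -> lhs = ip (iter n T2 f0) (iter q T2 f0)) /\
       (m <> p -> n = q -> lhs = ip (iter m T1 f0) (iter p T1 f0)) /\
       (m = p -> n = q ->
          lhs = ((ipnorm ip (iter m T1 f0)) ^+ 2 + (ipnorm ip (iter n T2 f0)) ^+ 2
                 - (ipnorm ip f0) ^+ 2)%:C)).
Proof.
move=> Hh Hb Hadj Hc Htor; cbv zeta.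
have Hip := Hh.1.
have iso : forall (j : 'I_2) x z, ip (T j (T j x)) (T j (T j z))
    = 2%:R * ip (T j x) (T j z) - ip x z.
  move=> j x z; have e := congr1 (ip^~ z) (Htor j j x); move: e => /=.
  rewrite !(ipDl Hip, ipBl Hip, ipNl Hip) (ip0l Hip) !(adjl Hip (Hadj j)) => e.
  by rewrite -[LHS]subr0 -e; ring.
have mixed : forall x z, ip (T ord0 (T ord_max x)) (T ord0 (T ord_max z))
    = ip (T ord0 x) (T ord0 z) + ip (T ord_max x) (T ord_max z) - ip x z.
  move=> x z; have e := congr1 (ip^~ z) (Htor ord0 ord_max x); move: e => /=.
  rewrite !(ipDl Hip, ipBl Hip, ipNl Hip) (ip0l Hip) !(adjl Hip (Hadj _)) => e.
  by rewrite -[LHS]subr0 -e; ring.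
have mixed' : forall x z, ip (T ord_max (T ord0 x)) (T ord_max (T ord0 z))
    = ip (T ord0 x) (T ord0 z) + ip (T ord_max x) (T ord_max z) - ip x z.
  move=> x z; have e := congr1 (ip^~ z) (Htor ord_max ord0 x); move: e => /=.
  rewrite !(ipDl Hip, ipBl Hip, ipNl Hip) (ip0l Hip) !(adjl Hip (Hadj _)) => e.
  by rewrite -[LHS]subr0 -e; ring.
have P1 : forall (j : 'I_2) k x z, ip (iter k (T j) x) (iter k (T j) z)
    = k%:R * ip (T j x) (T j z) - (k%:R - 1) * ip x z.
  move=> j; elim=> [|k IH] x z; first by rewrite /=; ring.
  by rewrite !iterSr IH iso; ring.
have P3 : forall k x z, ip (T ord_max (iter k (T ord0) x)) (T ord_max (iter k (T ord0) z))
    = ip (T ord_max x) (T ord_max z) + k%:R * ip (T ord0 x) (T ord0 z) - k%:R * ip x z.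
  elim=> [|k IH] x z; first by rewrite /=; ring.
  by rewrite !iterSr IH mixed' iso; ring.
split.
  move=> k l x; split.
    apply: (ip_ext Hip) => z.
    rewrite !(ipDl Hip, ipBl Hip, ipNl Hip) !(iter_adjl Hip (Hadj _)).
    by rewrite !P1 P3; ring.
  apply: (ip_ext Hip) => z.
  rewrite !(ipDl Hip, ipBl Hip, ipNl Hip, ipZl Hip) !(iter_adjl Hip (Hadj _)) !(adjl Hip (Hadj _)).
  by rewrite !P1; ring.
move=> f0 h1 h2 H1 H2.
have comm : forall k y, iter k (T ord0) (T ord_max y) = T ord_max (iter k (T ord0) y).
  by elim=> [//|k IH] y; rewrite !iterS IH Hc.
have bnd : forall m n p q, [|| n == 0%N, q == 0%N, m == 0%N | p == 0%N] ->
  ip (iter m (T ord0) (iter n (T ord_max) f0)) (iter p (T ord0) (iter q (T ord_max) f0))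
  = (m == p)%:R * ip (iter n (T ord_max) f0) (iter q (T ord_max) f0)
    + (n == q)%:R * ip (iter m (T ord0) f0) (iter p (T ord0) f0)
    - (m == p)%:R * (n == q)%:R * ip f0 f0.
  move=> m n p q.
  case: n => [|n]; case: q => [|q].
  - by move=> _ /=; ring.
  - move=> _; rewrite (H1 m p q.+1) // /= (adjr Hip (Hadj ord_max) f0) h2 (ip0l Hip); ring.
  - move=> _; rewrite [LHS](ip_sym Hip) (H1 p m n.+1) // conjc0 /= (Hadj ord_max _ f0) h2 (ip0r Hip); ring.
  case: m => [|m]; case: p => [|p] //.
  - by move=> _ /=; ring.
  - move=> _; rewrite (H2 n.+1 p.+1 q.+1) // /= (adjr Hip (Hadj ord0) f0) h1 (ip0l Hip); ring.
  - move=> _; rewrite [LHS](ip_sym Hip) (H2 q.+1 m.+1 n.+1) // conjc0 /= (Hadj ord0 _ f0) h1 (ip0r Hip); ring.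
have key : forall s m n p q, (m + n + p + q <= s)%N ->
  ip (iter m (T ord0) (iter n (T ord_max) f0)) (iter p (T ord0) (iter q (T ord_max) f0))
  = (m == p)%:R * ip (iter n (T ord_max) f0) (iter q (T ord_max) f0)
    + (n == q)%:R * ip (iter m (T ord0) f0) (iter p (T ord0) f0)
    - (m == p)%:R * (n == q)%:R * ip f0 f0.
  elim=> [|s IH] m n p q Hs.
    apply: bnd; case: m Hs => //; case: n => //.
  case: n Hs => [|n] Hs; first exact: bnd.
  case: q Hs => [|q] Hs; first by apply: bnd; rewrite orbT.
  case: m Hs => [|m] Hs; first by apply: bnd; rewrite !orbT.
  case: p Hs => [|p] Hs; first by apply: bnd; rewrite !orbT.
  have -> : ip (iter m.+1 (T ord0) (iter n.+1 (T ord_max) f0))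
              (iter p.+1 (T ord0) (iter q.+1 (T ord_max) f0))
    = ip (iter m.+1 (T ord0) (iter n (T ord_max) f0)) (iter p.+1 (T ord0) (iter q (T ord_max) f0))
    + ip (iter m (T ord0) (iter n.+1 (T ord_max) f0)) (iter p (T ord0) (iter q.+1 (T ord_max) f0))
    - ip (iter m (T ord0) (iter n (T ord_max) f0)) (iter p (T ord0) (iter q (T ord_max) f0)).
    by rewrite !iterS !comm mixed.
  rewrite IH; last lia.
  rewrite IH; last lia.
  rewrite IH; last lia.
  rewrite /=; ring.
move=> m n p q; rewrite /= (key _ m n p q (leqnn _)).
split; [|split; [|split]].
- by move=> /eqP/negbTE -> /eqP/negbTE -> /=; ring.
- by move=> -> /eqP/negbTE -> /=; rewrite eqxx /=; ring.
- by move=> /eqP/negbTE -> -> /=; rewrite eqxx /=; ring.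
- move=> -> ->; rewrite !eqxx /= rmorphB rmorphD /= !ipsq //; ring.
Qed.
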